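(* Consider the honeycomb lattice with Bravais lattice vectors $\bm a_1,\bm a_2$ and sites $A(\bm R),B(\bm R)$ for $\bm R\in\mathbb Z\bm a_1+\mathbb Z\bm a_2$, with nearest-neighbour bonds $A(\bm R)$–$B(\bm R)$ of type $c$, $A(\bm R)$–$B(\bm R-\bm a_1)$ of type $a$, and $A(\bm R)$–$B(\bm R-\bm a_2)$ of type $b$. Assign to every bond $\langle ij\rangle$ of type $\alpha$ the link matrix $U_{ij}=U_{ji}=U^\alpha$, where $$U^a=\tau^y\otimes I_2,\quad U^b=-\tau^x\otimes\sigma^z,\quad U^c=-\tau^x\otimes\sigma^y,$$ with $\tau^{x,y,z},\sigma^{x,y,z}$ Pauli matrices. Then (i) for every elementary hexagon $p$, the ordered product of the link matrices around $p$ equals $-I_4$; and (ii) for any finite flake $\Lambda$ of this lattice (a finite union of closed hexagonal plaquettes whose cycle space is generated by the hexagon boundaries) admitting a Hamiltonian path, there exist unitary $4\times4$ matrices $g_j$ and signs $\eta_{ij}=\eta_{ji}\in\{+1,-1\}$ such that $g_iU_{ij}g_j^\dagger=\eta_{ij}I_4$ for every bond of $\Lambda$ and $\prod_{\langle ij\rangle\in p}\eta_{ij}=-1$ for every hexagon $p$ of $\Lambda$. Consequently the Hubbard model $$H=-\frac{t}{\sqrt3}\sum_{\langle ij\rangle}\psi_i^\dagger U_{ij}\psi_j+h.c.+\frac U2\sum_j\psi_j^\dagger\psi_j(\psi_j^\dagger\psi_j-1)$$ on $\Lambda$ (with $\psi_j$ four-component fermionic spinors) is unitarily equivalent, via $\psi_j\to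 g_j\psi_j$, to the $\pi$-flux Hubbard model $-\frac{t}{\sqrt3}\sum_{\langle ij\rangle}\eta_{ij}\psi_i^\dagger\psi_j+h.c.+\frac U2\sum_j\psi_j^\dagger\psi_j(\psi_j^\dagger\psi_j-1)$, which has a global $\mathrm{SU}(4)$ symmetry.
   Context: $t,U$ are real. The Pauli matrices $\boldsymbol\tau$ act on the first and $\boldsymbol\sigma$ on the second tensor factor of $\mathbb C^2\otimes\mathbb C^2$. With the given bond assignment, each hexagon's bonds have types $c,a,b,c,a,b$ in cyclic order. This model arises as the $J_{\mathrm{eff}}=3/2$ description of $d^1$ ions (e.g. Zr$^{3+}$ in $\alpha$-ZrCl$_3$) on a honeycomb lattice of edge-sharing octahedra. *)

(* Defs.v *)
(* Complex scalars: algC (algebraic complex numbers, a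
   numClosedFieldType); all Pauli-matrix entries lie in algC. *)
From HB Require Import structures.
From mathcomp Require Import all_boot all_order all_algebra algC.
From mathcomp Require Import spectral mxtens.
Set Implicit Arguments. Unset Strict Implicit. Unset Printing Implicit Defensive.
Import Order.TTheory GRing.Theory Num.Theory.
Local Open Scope ring_scope.

Notation M4 := 'M[algC]_(2 * 2).

Definition mx2 (a b c d : algC) : 'M[algC]_2 :=
  \matrix_(i < 2, j < 2)
    if (i : nat) == 0%N then (if (j : nat) == 0%N then a else b)
    else (if (j : nat) == 0%N then c else d).

Definition pauli_x : 'M[algC]_2 := mx2 0 1 1 0.
Definition pauli_y : 'M[algC]_2 := mx2 0 (- 'i) 'i 0.
Definition pauli_z : 'M[algC]_2 := mx2 1 0 0 (-1).

(* tau acts on the first tensor factor, sigma on the second: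
   tau^mu (x) sigma^nu  =  tensmx tau sigma  (Kronecker product). *)
Definition U_a : M4 := pauli_y *t (1%:M : 'M[algC]_2).
Definition U_b : M4 := - (pauli_x *t pauli_z).
Definition U_c : M4 := - (pauli_x *t pauli_y).

(* Bravais vectors in the basis (a1, a2): R = n1 a1 + n2 a2 ~ (n1, n2). *)
Definition vec := (int * int)%type.
Definition vadd (u v : vec) : vec := (u.1 + v.1, u.2 + v.2).
Definition vsub (u v : vec) : vec := (u.1 - v.1, u.2 - v.2).
Definition a1 : vec := (1, 0).
Definition a2 : vec := (0, 1).
Definition v0 : vec := (0, 0).

Inductive btype := Ba | Bb | Bc.
Definition btype_eqb (x y : btype) : bool :=
  match x, y with Ba, Ba | Bb, Bb | Bc, Bc => true | _, _ => false end.
Lemma btype_eqP : Equality.axiom btype_eqb.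
Proof. by case; case; constructor. Qed.
HB.instance Definition _ := hasDecEq.Build btype btype_eqP.

Definition Umat (t : btype) : M4 :=
  match t with Ba => U_a | Bb => U_b | Bc => U_c end.

(* displacement: a bond of type t joins A(R) and B(R - delta t) *)
Definition delta (t : btype) : vec :=
  match t with Ba => a1 | Bb => a2 | Bc => v0 end.

(* sites: (true, R) = A(R), (false, R) = B(R) *)
Definition site := (bool * vec)%type.
Definition siteA (R : vec) : site := (true, R).
Definition siteB (R : vec) : site := (false, R).

(* bonds: (R, t) = the bond of type t between A(R) and B(R - delta t) *)
Definition bond := (vec * btype)%type.
Definition bond_A (e : bond) : site := siteA e.1.
Definition bond_B (e : bond) : site := siteB (vsub e.1 (delta e.2)).
Definition incident (v : site) (e : bond) : bool :=
  (v == bond_A e) || (v == bond_B e).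

Definition bondAB (R R' : vec) : option bond :=
  if R' == R then Some (R, Bc)
  else if R' == vsub R a1 then Some (R, Ba)
  else if R' == vsub R a2 then Some (R, Bb)
  else None.

Definition bond_of (i j : site) : option bond :=
  match i, j with
  | (true, R), (false, R') => bondAB R R'
  | (false, R'), (true, R) => bondAB R R'
  | _, _ => None
  end.

(* link matrix U_ij = U_ji = U^alpha on a bond of type alpha (0 otherwise) *)
Definition U (i j : site) : M4 :=
  match bond_of i j with Some e => Umat e.2 | None => 0 end.

(* hexagon labelled by R: vertices in cyclic order *)
Definition hex_vertices (R : vec) : seq site :=
  [:: siteA R; siteB R; siteA (vadd R a1); siteB (vsub (vadd R a1) a2);
      siteA (vsub (vadd R a1) a2); siteB (vsub R a2)].

Definition hex_bonds (R : vec) : seq bond :=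
  [:: (R, Bc); (vadd R a1, Ba); (vadd R a1, Bb);
      (vsub (vadd R a1) a2, Bc); (vsub (vadd R a1) a2, Ba); (R, Bb)].

Definition cyc_prod (s : seq site) : M4 :=
  foldr (fun p acc => U p.1 p.2 *m acc) 1%:M (zip s (rot 1 s)).

(* a flake is given by a finite list P of hexagon labels (closed plaquettes) *)
Definition flake_sites (P : seq vec) : seq site :=
  undup (flatten (map hex_vertices P)).
Definition flake_bonds (P : seq vec) : seq bond :=
  undup (flatten (map hex_bonds P)).
Definition flake_adj (P : seq vec) (i j : site) : bool :=
  match bond_of i j with Some e => e \in flake_bonds P | None => false end.

(* cycle space (over GF(2)) generated by the hexagon boundaries: every
   edge set of the flake with all degrees even is a GF(2)-sum of hexagon
   boundaries of the flake. *)
Definition cycle_space_generated_by_hexagons (P : seq vec) : Prop :=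
  forall E : pred bond,
    (forall e, E e -> e \in flake_bonds P) ->
    (forall v : site, ~~ odd (count (fun e => E e && incident v e) (flake_bonds P))) ->
    exists Q : pred vec, forall e,
      E e = odd (count (fun p => Q p && (e \in hex_bonds p)) (undup P)).

Definition has_hamiltonian_path (P : seq vec) : Prop :=
  exists (x : site) (s : seq site),
    [/\ uniq (x :: s),
        (forall v, (v \in x :: s) = (v \in flake_sites P)) &
        path (flake_adj P) x s].

(* Main.v *)
Require Import Defs.
From HB Require Import structures.
From mathcomp Require Import all_boot all_order all_algebra algC.
From mathcomp Require Import spectral mxtens.
From mathcomp Require Import ring lra zify.
Import Order.TTheory GRing.Theory Num.Theory.
Local Open Scope ring_scope.
Local Open Scope sesquilinear_scope.

Inductive P1 := I0 | PX | PY | PZ.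
Definition pm (a : P1) : 'M[algC]_2 :=
  match a with I0 => 1%:M | PX => pauli_x | PY => pauli_y | PZ => pauli_z end.
Definition mul1 (a b : P1) : nat * P1 :=
  match a, b with
  | I0, b => (0%N, b) | a, I0 => (0%N, a)
  | PX, PX => (0%N, I0) | PY, PY => (0%N, I0) | PZ, PZ => (0%N, I0)
  | PX, PY => (1%N, PZ) | PY, PX => (3%N, PZ)
  | PY, PZ => (1%N, PX) | PZ, PY => (3%N, PX)
  | PZ, PX => (1%N, PY) | PX, PZ => (3%N, PY)
  end.

Lemma mx2E (a b c d : algC) i j : mx2 a b c d i j =
  if (i : nat) == 0%N then (if (j : nat) == 0%N then a else b)
    else (if (j : nat) == 0%N then c else d).
Proof. by rewrite mxE. Qed.

Lemma pm_mul a b : pm a *m pm b = 'i ^+ (mul1 a b).1 *: pm (mul1 a b).2.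
Proof.
have i2 : 'i * 'i = -1 :> algC by rewrite -expr2 sqrCi.
case: a; case: b; rewrite /= ?mul1mx ?mulmx1 ?scale1r //;
apply/matrixP => -[[|[|i]] Hi] -[[|[|j]] Hj] //;
rewrite !mxE ?big_ord_recl ?big_ord0 /= !mxE /= ?expr1 ?i2; try ring.
all: have i3 : 'i ^+ 3 = - 'i :> algC by rewrite exprS sqrCi mulrN1.
all: rewrite ?i3 ?mulrN ?mulNr ?opprK ?i2; ring.
Qed.


Definition code := (nat * P1 * P1)%type.
Definition interp (c : code) : M4 := 'i ^+ c.1.1 *: (pm c.1.2 *t pm c.2).
Definition mulc (c d : code) : code :=
  let pe := mul1 c.1.2 d.1.2 in let qf := mul1 c.2 d.2 in
  (((c.1.1 + d.1.1 + pe.1 + qf.1) %% 4)%N, pe.2, qf.2).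
Definition adjc (c : code) : code := (((3 * c.1.1) %% 4)%N, c.1.2, c.2).

Lemma expi_mod n : 'i ^+ (n %% 4) = 'i ^+ n :> algC.
Proof.
rewrite {2}(divn_eq n 4) exprD mulnC exprM.
have -> : 'i ^+ 4 = 1 :> algC by rewrite (_ : 4 = 2 * 2)%N // exprM sqrCi expr2 mulrN1 opprK.
by rewrite expr1n mul1r.
Qed.

Lemma tensZ m n p q (a b : algC) (A : 'M[algC]_(m,n)) (B : 'M[algC]_(p,q)) :
  (a *: A) *t (b *: B) = (a * b) *: (A *t B).
Proof. by apply/matrixP => i j; rewrite !mxE mulrACA. Qed.

Lemma interp_mul c d : interp c *m interp d = interp (mulc c d).
Proof.
case: c => [[k a] b]; case: d => [[l e] f].
rewrite /interp /mulc /= -scalemxAl -scalemxAr scalerA tensmx_mul !pm_mul tensZ.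
by rewrite scalerA expi_mod !exprD !mulrA [_ * 'i ^+ l]mulrC.
Qed.

Lemma pm_adj a : (pm a)^t* = pm a.
Proof.
case: a; apply/matrixP => -[[|[|i]] Hi] -[[|[|j]] Hj] //;
rewrite !mxE /= ?rmorph0 ?rmorph1 ?rmorphN ?rmorph1 //.
all: try exact: conjCi.
all: apply/eqP; rewrite eqr_oppLR; apply/eqP; exact: conjCi.
Qed.

Lemma adj_scale m n (a : algC) (M : 'M[algC]_(m,n)) : (a *: M)^t* = a^* *: M^t*.
Proof. by apply/matrixP => i j; rewrite !mxE rmorphM. Qed.

Lemma tens_adj m n p q (A : 'M[algC]_(m,n)) (B : 'M[algC]_(p,q)) :
  (A *t B)^t* = A^t* *t B^t*.
Proof. by apply/matrixP => i j; rewrite !mxE rmorphM. Qed.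

Lemma interp_adj c : (interp c)^t* = interp (adjc c).
Proof.
case: c => [[k a] b]; rewrite /interp /adjc /=.
have e : ('i ^+ k)^* = (-'i) ^+ k :> algC.
  by rewrite rmorphXn; congr (_ ^+ _); exact: conjCi.
rewrite adj_scale tens_adj !pm_adj expi_mod e.
congr (_ *: _); rewrite exprM; congr (_ ^+ _).
by rewrite exprS sqrCi mulrN1.
Qed.

Definition onec : code := (0%N, I0, I0).
Definition monec : code := (2%N, I0, I0).

Lemma interp_scal k : interp (k, I0, I0) = ('i ^+ k)%:M.
Proof.
rewrite /interp /pm /= -[RHS]scalemx1.
have -> : (1%:M : 'M[algC]_2) *t (1%:M : 'M[algC]_2) = 1%:M.
  apply/matrixP => i j.
  case: (mxtens_indexP i) => i0 i1; case: (mxtens_indexP j) => j0 j1.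
  rewrite tensmxE !mxE -natrM mulnb; congr ((_ : bool)%:R).
  by rewrite (inj_eq (can_inj (@mxtens_indexK _ _))) xpair_eqE.
by [].
Qed.

Lemma interp_one : interp onec = 1%:M.
Proof. by rewrite interp_scal expr0. Qed.
Lemma interp_mone : interp monec = - 1%:M.
Proof. by rewrite interp_scal sqrCi raddfN. Qed.

Definition ucode (t : btype) : code :=
  match t with Ba => (0%N, PY, I0) | Bb => (2%N, PX, PZ) | Bc => (2%N, PX, PY) end.
Lemma Umat_code t : Umat t = interp (ucode t).
Proof.
by case: t; rewrite /interp /= ?scale1r ?sqrCi ?scaleN1r.
Qed.

Lemma unitary_code c : interp c \is unitarymx.
Proof.
apply/unitarymxP; rewrite interp_adj interp_mul -interp_one.
case: c => [[k a] b]; rewrite /mulc /adjc /onec /=.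
have H x : mul1 x x = (0%N, I0) by case: x.
rewrite !H /= !addn0 modnDmr -{1}(mul1n k) -mulnDl mulnC modnMl.
by [].
Qed.


Definition m4 (n : int) : nat := absz (n %% 4)%Z.
Lemma m4D1 n : m4 (n + 1) = ((m4 n + 1) %% 4)%N.
Proof. rewrite /m4; lia. Qed.
Lemma m4B1 n : m4 (n - 1) = ((m4 n + 3) %% 4)%N.
Proof. rewrite /m4; lia. Qed.
Lemma m4_lt n : (m4 n < 4)%N.
Proof. rewrite /m4; lia. Qed.
Lemma ne1 (x : int) : (x - 1 == x) = false.
Proof. apply/eqP; lia. Qed.
Ltac solve_bond :=
  rewrite /U /bond_of /bondAB /siteA /siteB /vsub /vadd /=;
  repeat (case: ifP => /eqP; [ try (by case=> *; exfalso; lia); move=> _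
                            | let H := fresh in move=> H; try (by exfalso; apply: H; f_equal; lia) ]);
  done.

Lemma U_AB R t : U (siteA R) (siteB (vsub R (delta t))) = Umat t.
Proof. case: R => x y; case: t; solve_bond. Qed.
Lemma U_BA R t : U (siteB (vsub R (delta t))) (siteA R) = Umat t.
Proof. case: R => x y; case: t; solve_bond. Qed.


Lemma Ua_code : U_a = interp (ucode Ba). Proof. exact: Umat_code Ba. Qed.
Lemma Ub_code : U_b = interp (ucode Bb). Proof. exact: Umat_code Bb. Qed.
Lemma Uc_code : U_c = interp (ucode Bc). Proof. exact: Umat_code Bc. Qed.

Lemma cyc6 (s0 s1 s2 s3 s4 s5 : site) k (rv : bool) :
  U s0 s1 = U_c -> U s1 s0 = U_c -> U s1 s2 = U_a -> U s2 s1 = U_a ->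
  U s2 s3 = U_b -> U s3 s2 = U_b -> U s3 s4 = U_c -> U s4 s3 = U_c ->
  U s4 s5 = U_a -> U s5 s4 = U_a -> U s5 s0 = U_b -> U s0 s5 = U_b ->
  cyc_prod (rot k (if rv then rev [:: s0; s1; s2; s3; s4; s5]
                   else [:: s0; s1; s2; s3; s4; s5])) = - 1%:M.
Proof.
move=> H0 H1 H2 H3 H4 H5 H6 H7 H8 H9 H10 H11.
have [hk|hk] := ltnP k 6; last first.
  rewrite rot_oversize; last by case: rv.
  case: rv; rewrite /cyc_prod /= ?(H0,H1,H2,H3,H4,H5,H6,H7,H8,H9,H10,H11)
    mulmx1 Ua_code Ub_code Uc_code !interp_mul -interp_mone; f_equal; by [].
case: k hk => [|[|[|[|[|[|]]]]]] // _;
case: rv; rewrite /cyc_prod /= ?(H0,H1,H2,H3,H4,H5,H6,H7,H8,H9,H10,H11)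
    mulmx1 ?Ua_code ?Ub_code ?Uc_code !interp_mul -interp_mone; f_equal; by [].
Qed.


Lemma U_AB' R R' t : R' = vsub R (delta t) -> U (siteA R) (siteB R') = Umat t.
Proof. by move=> ->; exact: U_AB. Qed.
Lemma U_BA' R R' t : R' = vsub R (delta t) -> U (siteB R') (siteA R) = Umat t.
Proof. by move=> ->; exact: U_BA. Qed.

Lemma part1 (R : vec) (k : nat) (reverse : bool) :
  cyc_prod (rot k (if reverse then rev (hex_vertices R) else hex_vertices R))
      = - 1%:M.
Proof.
case: R => x y; rewrite /hex_vertices.
apply: cyc6; first [apply: (@U_AB' _ _ Ba) | apply: (@U_BA' _ _ Ba) | apply: (@U_AB' _ _ Bb) | apply: (@U_BA' _ _ Bb) | apply: (@U_AB' _ _ Bc) | apply: (@U_BA' _ _ Bc)];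
  rewrite /vsub /vadd /=; f_equal; ring.
Qed.

Definition Xc := mulc (ucode Bc) (ucode Ba).
Definition Yc := mulc (ucode Bc) (ucode Bb).
Definition sigc (r1 : nat) := if (r1 < 2)%N then onec else monec.
Definition gAc (r1 r2 : nat) :=
  mulc (sigc r1) (mulc (if odd r1 then Xc else onec) (if odd r2 then Yc else onec)).
Definition etacode (r2 : nat) := if odd r2 then monec else onec.
Definition gBc (r1 r2 : nat) := mulc (etacode r2) (mulc (gAc r1 r2) (ucode Bc)).
Definition gg (v : site) : M4 :=
  interp (if v.1 then gAc (m4 v.2.1) (m4 v.2.2) else gBc (m4 v.2.1) (m4 v.2.2)).
Definition eta (e : bond) : algC :=
  match e.2 with Bc => if odd (m4 e.1.2) then -1 else 1 | _ => 1 end.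

Lemma eta_code e : (eta e)%:M = interp (match e.2 with Bc => etacode (m4 e.1.2) | _ => onec end).
Proof.
rewrite /eta /etacode; case: e.2; rewrite ?interp_one //.
by case: ifP; rewrite ?interp_one ?interp_mone // raddfN.
Qed.

Lemma bond_eq e :
  gg (bond_A e) *m U (bond_A e) (bond_B e) *m (gg (bond_B e))^t* = (eta e)%:M
  /\ gg (bond_B e) *m U (bond_B e) (bond_A e) *m (gg (bond_A e))^t* = (eta e)%:M.
Proof.
have -> : U (bond_A e) (bond_B e) = Umat e.2 by exact: U_AB.
have -> : U (bond_B e) (bond_A e) = Umat e.2 by exact: U_BA.
rewrite eta_code Umat_code /gg !interp_adj !interp_mul.
case: e => [[x y] t]; case: t; rewrite /= ?subr0 ?m4B1;
move: (m4_lt x) (m4_lt y); move: (m4 x) (m4 y) => r1 r2;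
case: r1 => [|[|[|[|r1]]]] //; case: r2 => [|[|[|[|r2]]]] // _ _;
split; f_equal; by [].
Qed.

Lemma hex_eta p : \prod_(e <- hex_bonds p) eta e = -1.
Proof.
case: p => x y; rewrite /hex_bonds !big_cons big_nil /eta /vsub /vadd /= ?addr0 ?subr0 ?m4B1.
move: (m4_lt y); move: (m4 y) => r.
by case: r => [|[|[|[|r]]]] //= _; ring.
Qed.

Theorem mainTheorem3 :
  (forall (R : vec) (k : nat) (reverse : bool),
      cyc_prod (rot k (if reverse then rev (hex_vertices R) else hex_vertices R))
      = - 1%:M)
  /\
  (forall P : seq vec,
      cycle_space_generated_by_hexagons P ->
      has_hamiltonian_path P ->
      exists (g : site -> M4) (eta : bond -> algC),
        [/\ (forall v, v \in flake_sites P -> g v \is unitarymx),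
            (forall e, e \in flake_bonds P -> eta e = 1 \/ eta e = -1),
            (forall e, e \in flake_bonds P ->
               g (bond_A e) *m U (bond_A e) (bond_B e) *m (g (bond_B e))^t*
                 = (eta e)%:M
               /\ g (bond_B e) *m U (bond_B e) (bond_A e) *m (g (bond_A e))^t*
                 = (eta e)%:M) &
            (forall p, p \in P -> \prod_(e <- hex_bonds p) eta e = -1)]).
Proof.
split; first exact: part1.
move=> P _ _; exists gg, eta; split.
- by move=> v _; exact: unitary_code.
- by move=> [R t] _; rewrite /eta; case: t; try case: ifP; auto.
- by move=> e _; exact: bond_eq.
- by move=> p _; exact: hex_eta.
Qed.
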